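(* Let $n,d$ be positive integers with $d\mid 2n^2$ and $2n^2>d^2$, and let $(a,b,c)=\left(2n+d,\ \tfrac{2n^2}{d}+2n,\ \tfrac{2n^2}{d}+2n+d\right)$ (a DPT). If there exists a prime $p>2$ such that $e_p(d)$ is odd, then $\gcd(a,b,c)>1$, i.e. $(a,b,c)$ is reducible.
   Context: A Diophantine Pythagorean Triangle (DPT) is a triple $(a,b,c)$ of positive integers with $a<b<c$ and $a^2+b^2=c^2$. For a prime $p$, $e_p(d)$ denotes the exponent of $p$ in the prime factorization of $d$. *)

(* Defs.v *)
From mathcomp Require Import all_boot.

(* Main.v *)
Require Import Defs.
From mathcomp Require Import all_boot.

Theorem lemma6 (n d : nat) :
  0 < n -> 0 < d -> d %| 2 * n ^ 2 -> d ^ 2 < 2 * n ^ 2 ->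
  (exists p : nat, [/\ prime p, 2 < p & odd (logn p d)]) ->
  1 < gcdn (gcdn (2 * n + d) (2 * n ^ 2 %/ d + 2 * n))
           (2 * n ^ 2 %/ d + 2 * n + d).
Proof.
move=> n0 d0 dd _ [p [pp p2 od]].
set m := 2 * n ^ 2 %/ d.
have md : m * d = 2 * n ^ 2 by rewrite /m divnK.
have m0 : 0 < m by rewrite /m divn_gt0 // dvdn_leq // muln_gt0 expn_gt0 n0.
have pd : p %| d.
  have : 0 < logn p d by case: (logn p d) od.
  by rewrite logn_gt0 mem_primes => /and3P[].
have p2c : coprime p 2.
  by rewrite prime_coprime // dvdn_prime2 //; apply/eqP=> E; rewrite E in p2.
have pn : p %| n.
  have : p %| 2 * n ^ 2 by rewrite -md dvdn_mull.
  by rewrite Gauss_dvdr // Euclid_dvdX // => /andP[].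
have pm : p %| m.
  apply/negPn/negP => npm.
  have cm : coprime p m by rewrite prime_coprime.
  have := congr1 (logn p) md.
  rewrite lognM // logn_coprime // lognM ?expn_gt0 ?n0 // lognX.
  idtac.
  rewrite (logn_coprime p2c) add0n => E.
  by move: od; rewrite E oddM.
have pg : p %| gcdn (gcdn (2 * n + d) (m + 2 * n)) (m + 2 * n + d).
  rewrite !dvdn_gcd.
  have p2n : p %| 2 * n by rewrite dvdn_mull.
  by rewrite !dvdn_add.
apply: (leq_trans (prime_gt1 pp)); apply: dvdn_leq pg.
by rewrite !gcdn_gt0 !addn_gt0 d0 !orbT.
Qed.
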